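(* Let $(X,d)$ be a bicomplete quasi-pseudometric space. Let $J:X\to X$ be a continuous single-valued map such that $r\,d(x,y)\le d(Jx,Jy)$ for all $x,y\in X$, for some constant $r>0$. Let $F:X\to CB(X)$ be a set-valued map such that $$H(Fx,Fy)\le \alpha\, d(Jx,Jy)\quad\text{for all }x,y\in X,$$ where $\alpha\in(0,1)$ and $r\alpha<1$. Then there exists a unique $x_0\in X$ which is both a startpoint and an endpoint of $J$ and $F$ if and only if $J$ and $F$ have the approximate mix-point property.
   Context: A quasi-pseudometric on a nonempty set $X$ is a map $d:X\times X\to[0,\infty)$ with $d(x,x)=0$ and $d(x,z)\le d(x,y)+d(y,z)$ for all $x,y,z$; it is $T_0$ if $d(x,y)=0=d(y,x)$ implies $x=y$. Write $d^s(x,y)=\max\{d(x,y),d(y,x)\}$. The space $(X,d)$ is bicomplete if $d$ is $T_0$ and the metric $d^s$ is complete. For $x\in X$ and nonempty $A\subseteq X$: $d(x,A)=\inf_{a\in A}d(x,a)$, $d(A,x)=\inf_{a\in A}d(a,x)$. For nonempty $A,B\subseteq X$: $H(A,B)=\max\{\sup_{a\in A}d(a,B),\ \sup_{b\in B}d(A,b)\}$. $CB(X)$ denotes the family of nonempty $d^s$-bounded, $\tau(d^s)$-closed subsets of $X$; continuity of $J$ is with respect to $\tau(d^s)$. For $J:X\to X$ and $F:X\to 2^X$, a point $x$ is a startpoint of $J$ and $F$ if $H(\{Jx\},Fx)=0$ and an endpoint of $J$ and $F$ if $H(Fx,\{Jx\})=0$. $J$ and $F$ have the approximate mix-point property if $\inf_{x\in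 X}\sup_{y\in Fx}d^s(Jx,y)=0$. *)

(* Defs.v *)
From Stdlib Require Import Reals Lra Classical.
Open Scope R_scope.

Section QPM.
Variable X : Type.
Variable d : X -> X -> R.

Definition quasi_pseudometric : Prop :=
  (forall x y, 0 <= d x y) /\ (forall x, d x x = 0) /\
  (forall x y z, d x z <= d x y + d y z).

Definition T0 : Prop := forall x y, d x y = 0 -> d y x = 0 -> x = y.

Definition ds (x y : X) : R := Rmax (d x y) (d y x).

Definition ds_cauchy (u : nat -> X) : Prop :=
  forall eps, eps > 0 -> exists N, forall m n, (m >= N)%nat -> (n >= N)%nat ->
    ds (u m) (u n) < eps.

Definition ds_converges (u : nat -> X) (x : X) : Prop :=
  forall eps, eps > 0 -> exists N, forall n, (n >= N)%nat -> ds (u n) x < eps.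

Definition bicomplete : Prop :=
  T0 /\ forall u, ds_cauchy u -> exists x, ds_converges u x.

Definition ds_continuous (J : X -> X) : Prop :=
  forall x eps, eps > 0 -> exists delta, delta > 0 /\
    forall y, ds x y < delta -> ds (J x) (J y) < eps.

Definition CB (A : X -> Prop) : Prop :=
  (exists a, A a) /\
  (exists M, forall a b, A a -> A b -> ds a b <= M) /\
  (forall x, (forall eps, eps > 0 -> exists a, A a /\ ds x a < eps) -> A x).

(* d(x,A) = inf_{a in A} d(x,a) <= c, unfolded *)
Definition dist_pt_set_le (x : X) (A : X -> Prop) (c : R) : Prop :=
  forall eps, eps > 0 -> exists a, A a /\ d x a < c + eps.
(* d(A,x) = inf_{a in A} d(a,x) <= c, unfolded *)
Definition dist_set_pt_le (A : X -> Prop) (x : X) (c : R) : Prop :=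
  forall eps, eps > 0 -> exists a, A a /\ d a x < c + eps.

(* H(A,B) <= c, i.e. max{sup_{a in A} d(a,B), sup_{b in B} d(A,b)} <= c *)
Definition H_le (A B : X -> Prop) (c : R) : Prop :=
  (forall a, A a -> dist_pt_set_le a B c) /\
  (forall b, B b -> dist_set_pt_le A b c).

Definition singleton (x : X) : X -> Prop := fun y => y = x.

(* H({Jx},Fx) = 0  (H is nonnegative, so = 0 iff <= 0) *)
Definition startpoint (J : X -> X) (F : X -> X -> Prop) (x : X) : Prop :=
  H_le (singleton (J x)) (F x) 0.
(* H(Fx,{Jx}) = 0 *)
Definition endpoint (J : X -> X) (F : X -> X -> Prop) (x : X) : Prop :=
  H_le (F x) (singleton (J x)) 0.

(* inf_x sup_{y in Fx} d^s(Jx,y) = 0 (the quantity is nonnegative as Fx is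
   nonempty), unfolded: for all eps > 0 some x has sup_{y in Fx} d^s(Jx,y) <= eps *)
Definition approx_mix_point (J : X -> X) (F : X -> X -> Prop) : Prop :=
  forall eps, eps > 0 -> exists x, forall y, F x y -> ds (J x) y <= eps.

End QPM.

Arguments quasi_pseudometric {X}. Arguments T0 {X}. Arguments ds {X}.
Arguments ds_cauchy {X}. Arguments ds_converges {X}. Arguments bicomplete {X}.
Arguments ds_continuous {X}. Arguments CB {X}. Arguments dist_pt_set_le {X}.
Arguments dist_set_pt_le {X}. Arguments H_le {X}. Arguments singleton {X}.
Arguments startpoint {X}. Arguments endpoint {X}. Arguments approx_mix_point {X}.

(* Main.v *)
Require Import Defs.
From Stdlib Require Import Reals Lra Lia Classical ClassicalEpsilon Arith.
Open Scope R_scope.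

Lemma ds_l {X} (d : X -> X -> R) x y : d x y <= ds d x y.
Proof. unfold ds; apply Rmax_l. Qed.
Lemma ds_r {X} (d : X -> X -> R) x y : d y x <= ds d x y.
Proof. unfold ds; apply Rmax_r. Qed.
Lemma ds_sym {X} (d : X -> X -> R) x y : ds d x y = ds d y x.
Proof. unfold ds; apply Rmax_comm. Qed.

Lemma inv_mono (N n : nat) : (0 < N)%nat -> (N <= n)%nat -> / INR (S n) <= / INR N.
Proof. intros. apply Rinv_le_contravar. apply lt_0_INR; lia. apply le_INR; lia. Qed.

Theorem mainTheorem4 (X : Type) (d : X -> X -> R) (J : X -> X)
  (F : X -> X -> Prop) (r alpha : R) :
  inhabited X ->
  quasi_pseudometric d ->
  bicomplete d ->
  ds_continuous d J ->
  r > 0 ->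
  (forall x y, r * d x y <= d (J x) (J y)) ->
  (forall x, CB d (F x)) ->
  0 < alpha < 1 ->
  r * alpha < 1 ->
  (forall x y, H_le d (F x) (F y) (alpha * d (J x) (J y))) ->
  ((exists! x0, startpoint d J F x0 /\ endpoint d J F x0) <->
   approx_mix_point d J F).
Proof.
  intros inh qpm bic cont rpos Jexp CBF al ral HF.
  destruct qpm as [dnn [dxx dtri]]. destruct bic as [T0d compl].
  assert (ne : forall x, exists a, F x a) by (intro x; exact (proj1 (CBF x))).
  assert (char1 : forall x, startpoint d J F x /\ endpoint d J F x ->
                       forall y, F x y -> y = J x).
  { intros x [[S1 S2] [E1 E2]] y Hy. apply T0d.
    - apply Rle_antisym; [|apply dnn]. apply Rle_plus_epsilon. intros e He.
      destruct (E1 y Hy e He) as [a [Ha Hd]]. unfold singleton in Ha; subst; lra.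
    - apply Rle_antisym; [|apply dnn]. apply Rle_plus_epsilon. intros e He.
      destruct (S2 y Hy e He) as [a [Ha Hd]]. unfold singleton in Ha; subst; lra. }
  assert (char2 : forall x, (forall y, F x y -> y = J x) ->
                       startpoint d J F x /\ endpoint d J F x).
  { intros x H. split; split.
    - intros a Ha e He. unfold singleton in Ha; subst. destruct (ne x) as [b Hb].
      exists b. split; auto. rewrite (H b Hb), dxx. lra.
    - intros b Hb e He. exists (J x). split; [reflexivity|]. rewrite (H b Hb), dxx; lra.
    - intros a Ha e He. exists (J x). split; [reflexivity|]. rewrite (H a Ha), dxx; lra.
    - intros b Hb e He. unfold singleton in Hb; subst. destruct (ne x) as [a Ha].
      exists a. split; auto. rewrite (H a Ha), dxx. lra. }
  split.
  - intros [x0 [Hse _]] eps Heps. exists x0. intros y Hy.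
    rewrite (char1 x0 Hse y Hy). unfold ds; rewrite dxx, Rmax_left; lra.
  - intros AM.
    assert (uJ : forall x y, (forall z, F x z -> z = J x) -> (forall z, F y z -> z = J y)
               -> d (J x) (J y) = 0).
    { intros x y Hx Hy.
      assert (Fx : F x (J x)) by (destruct (ne x) as [b Hb]; rewrite <- (Hx b Hb); exact Hb).
      assert (H : d (J x) (J y) <= alpha * d (J x) (J y)).
      { apply Rle_plus_epsilon. intros e He.
        destruct (proj1 (HF x y) (J x) Fx e He) as [a [Ha Hd]].
        rewrite (Hy a Ha) in Hd. lra. }
      pose proof (dnn (J x) (J y)). nra. }
    assert (uniq : forall x y, (forall z, F x z -> z = J x) -> (forall z, F y z -> z = J y)
               -> x = y).
    { intros x y Hx Hy. pose proof (uJ x y Hx Hy). pose proof (uJ y x Hy Hx).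
      pose proof (Jexp x y). pose proof (Jexp y x). pose proof (dnn x y). pose proof (dnn y x).
      apply T0d; nra. }
    assert (ex : exists x0, forall z, F x0 z -> z = J x0).
    2:{ destruct ex as [x0 Hx0]. exists x0. split; [apply char2; auto|].
        intros y Hy. apply uniq; auto. }
    set (e := fun n : nat => / INR (S n)).
    assert (epos : forall n, e n > 0).
    { intro n. unfold e. apply Rinv_0_lt_compat, lt_0_INR; lia. }
    assert (Hn : forall n, exists x, forall y, F x y -> ds d (J x) y <= e n).
    { intro n. exact (AM (e n) (epos n)). }
    set (xs := fun n => proj1_sig (constructive_indefinite_description _ (Hn n))).
    assert (Hxs : forall n y, F (xs n) y -> ds d (J (xs n)) y <= e n).
    { intro n. exact (proj2_sig (constructive_indefinite_description _ (Hn n))). }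
    assert (est : forall n m, d (J (xs n)) (J (xs m)) <= (e n + e m) / (1 - alpha)).
    { intros n m.
      assert (H : d (J (xs n)) (J (xs m)) <= e n + e m + alpha * d (J (xs n)) (J (xs m))).
      { apply Rle_plus_epsilon. intros eps Heps. destruct (ne (xs n)) as [y Hy].
        destruct (proj1 (HF (xs n) (xs m)) y Hy eps Heps) as [a [Ha Hda]].
        pose proof (dtri (J (xs n)) y (J (xs m))). pose proof (dtri y a (J (xs m))).
        pose proof (Hxs n y Hy). pose proof (ds_l d (J (xs n)) y).
        pose proof (Hxs m a Ha). pose proof (ds_r d (J (xs m)) a). lra. }
      apply (Rmult_le_reg_l (1 - alpha)); [lra|].
      replace ((1 - alpha) * ((e n + e m) / (1 - alpha))) with (e n + e m) by (field; lra).
      lra. }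
    set (c := (1 - alpha) * r).
    assert (cpos : c > 0) by (unfold c; nra).
    assert (est2 : forall n m, ds d (xs n) (xs m) <= (e n + e m) / c).
    { assert (H : forall n m, d (xs n) (xs m) <= (e n + e m) / c).
      { intros n m. apply (Rmult_le_reg_l r); [lra|].
        replace (r * ((e n + e m) / c)) with ((e n + e m) / (1 - alpha)) by (unfold c; field; lra).
        pose proof (Jexp (xs n) (xs m)). pose proof (est n m). lra. }
      intros n m. unfold ds. apply Rmax_lub; [apply H|].
      rewrite (Rplus_comm (e n)). apply H. }
    assert (cau : ds_cauchy d xs).
    { intros eps Heps. destruct (archimed_cor1 (eps * c / 2)) as [N [HN HNpos]].
      { nra. }
      exists N. intros m n Hm Hn'.
      pose proof (inv_mono N m HNpos Hm). pose proof (inv_mono N n HNpos Hn').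
      apply (Rle_lt_trans _ _ _ (est2 m n)).
      apply (Rmult_lt_reg_r c); [lra|].
      replace ((e m + e n) / c * c) with (e m + e n) by (field; lra).
      unfold e. lra. }
    destruct (compl xs cau) as [x conv].
    assert (near : forall eps, eps > 0 -> exists n, e n < eps /\ ds d (J x) (J (xs n)) < eps).
    { intros eps Heps. destruct (cont x eps Heps) as [delta [Hd Hc]].
      destruct (conv delta Hd) as [N1 HN1].
      destruct (archimed_cor1 eps Heps) as [N2 [HN2 HN2pos]].
      exists (max N1 N2). split.
      - pose proof (inv_mono N2 (max N1 N2) HN2pos ltac:(lia)). unfold e; lra.
      - apply Hc. rewrite ds_sym. apply HN1. lia. }
    exists x. intros y Hy. apply T0d.
    + apply Rle_antisym; [|apply dnn]. apply Rle_plus_epsilon. intros eps Heps.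
      destruct (near (eps/4) ltac:(lra)) as [n [Hen Hdn]].
      destruct (proj1 (HF x (xs n)) y Hy (eps/4) ltac:(lra)) as [z [Hz Hdz]].
      pose proof (dtri y z (J x)). pose proof (dtri z (J (xs n)) (J x)).
      pose proof (Hxs n z Hz). pose proof (ds_r d (J (xs n)) z).
      pose proof (ds_r d (J x) (J (xs n))). pose proof (ds_l d (J x) (J (xs n))).
      pose proof (dnn (J x) (J (xs n))).
      assert (alpha * d (J x) (J (xs n)) <= d (J x) (J (xs n))) by nra. lra.
    + apply Rle_antisym; [|apply dnn]. apply Rle_plus_epsilon. intros eps Heps.
      destruct (near (eps/4) ltac:(lra)) as [n [Hen Hdn]].
      destruct (proj2 (HF (xs n) x) y Hy (eps/4) ltac:(lra)) as [z [Hz Hdz]].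
      pose proof (dtri (J x) (J (xs n)) y). pose proof (dtri (J (xs n)) z y).
      pose proof (Hxs n z Hz). pose proof (ds_l d (J (xs n)) z).
      pose proof (ds_l d (J x) (J (xs n))). pose proof (ds_r d (J x) (J (xs n))).
      pose proof (dnn (J (xs n)) (J x)).
      assert (alpha * d (J (xs n)) (J x) <= d (J (xs n)) (J x)) by nra. lra.
Qed.
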